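(* Consider the Normal Partizan Domination game on a star $K_{1,n}$ with $n\geq 1$, whose universal (center) vertex has color $C$, with $a$ leaves of color $A$ and $b=n-a$ leaves of color $B$. If $a=b$, the value is $*2$. If $|a-b|=1$, the value is $*$. If $a\geq b+2$, the value is $\uparrow^{[a-b-1]}*$. If $b\geq a+2$, the value is $\downarrow_{[b-a-1]}*$.
   Context: Normal Partizan Domination game: a finite graph $G$ has each vertex colored $A$, $B$ or $C$. Alice and Bob alternately select a vertex; Alice may only select vertices colored $A$ or $C$, Bob only vertices colored $B$ or $C$. A vertex $u$ dominates $v$ if $u=v$ or $uv$ is an edge. A vertex may be selected only if it is playable, i.e. it dominates at least one vertex not dominated by the previously selected vertices; the game ends when the selected vertices form a dominating set. Under normal play the player unable to move loses. The game is regarded as a partizan combinatorial game with Alice as Left and Bob as Right, and its value is its value in Conway's combinatorial game theory ($\{X\mid Y\}$ has Left options $X$ and Right options $Y$; $G=H$ iff $G+(-H)$ is a second-player win). Notation: $*=\{0\mid 0\}$, $*2=\{0,*\mid 0,*\}$, $\uparrow=\{0\mid *\}$, $\downarrow=\{*\mid 0\}$; $\uparrow^{[1]}=\uparrow$, $\uparrow^{[m]}=\{\uparrow^{[m-1]}\mid *\}$ for $m\geq 2$; $\downarrow_{[1]}=\downarrow$, $\downarrow_{[m]}=\{*\mid \downarrow_{[m-1]}\}$ for $m\geq 2$; $J*$ denotes $J+*$. *)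

(* Defs.v *)
From mathcomp Require Import all_boot.
Set Implicit Arguments. Unset Strict Implicit. Unset Printing Implicit Defensive.

Inductive game : Type := Game : seq game -> seq game -> game.

Definition left_opts (G : game) := let: Game L _ := G in L.
Definition right_opts (G : game) := let: Game _ R := G in R.

Fixpoint gadd (G H : game) {struct G} : game :=
  match G with Game GL GR =>
    let fix addH (H : game) : game :=
      match H with Game HL HR =>
        Game ([seq gadd g H | g <- GL] ++ [seq addH h | h <- HL])
             ([seq gadd g H | g <- GR] ++ [seq addH h | h <- HR])
      end in addH H
  end.

Fixpoint gneg (G : game) : game :=
  match G with Game L R => Game [seq gneg g | g <- R] [seq gneg g | g <- L] end.

(** Normal play: (Left wins moving first, Right wins moving first).
    A player with no move loses. *)
Fixpoint wins (G : game) : bool * bool :=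
  match G with Game L R =>
    (has (fun g => ~~ (wins g).2) L, has (fun g => ~~ (wins g).1) R)
  end.

Definition second_player_win (G : game) : Prop :=
  ~~ (wins G).1 /\ ~~ (wins G).2.

Definition game_eq (G H : game) : Prop := second_player_win (gadd G (gneg H)).

Definition gzero : game := Game [::] [::].
Definition gstar : game := Game [:: gzero] [:: gzero].
Definition gstar2 : game := Game [:: gzero; gstar] [:: gzero; gstar].
Definition gup : game := Game [:: gzero] [:: gstar].
Definition gdown : game := Game [:: gstar] [:: gzero].

(** up^[m] (m >= 1): up^[1] = up, up^[m] = { up^[m-1] | * }.
    (The value at m = 0 is an unused junk value.) *)
Fixpoint up_pow (m : nat) : game :=
  match m with
  | 0 => gup
  | 1 => gup
  | m'.+1 => Game [:: up_pow m'] [:: gstar]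
  end.

Fixpoint down_pow (m : nat) : game :=
  match m with
  | 0 => gdown
  | 1 => gdown
  | m'.+1 => Game [:: gstar] [:: down_pow m']
  end.

Inductive color := colA | colB | colC.
Definition color_eqb (x y : color) : bool :=
  match x, y with colA, colA | colB, colB | colC, colC => true | _, _ => false end.

Section Domination.
Variables (T : finType) (adj : rel T) (col : T -> color).

Definition cnbhd (v : T) : {set T} := [set u | (u == v) || adj v u].

Definition alice_can (v : T) : bool := ~~ color_eqb (col v) colB.
Definition bob_can (v : T) : bool := ~~ color_eqb (col v) colA.

Definition playable (D : {set T}) (v : T) : bool := ~~ (cnbhd v \subset D).

(** Game tree from the position whose dominated set is D; each move strictly
    enlarges D, so fuel #|T| suffices. *)
Fixpoint dom_game_from (fuel : nat) (D : {set T}) : game :=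
  match fuel with
  | 0 => gzero
  | k.+1 =>
    Game [seq dom_game_from k (D :|: cnbhd v) | v <- enum T & alice_can v && playable D v]
         [seq dom_game_from k (D :|: cnbhd v) | v <- enum T & bob_can v && playable D v]
  end.

Definition dom_game : game := dom_game_from #|T| set0.
End Domination.

Definition star_adj (n : nat) : rel 'I_n.+1 :=
  fun u v => (u == ord0) != (v == ord0).

(* Main.v *)
Require Import Defs.
From mathcomp Require Import all_boot zify.
Set Implicit Arguments. Unset Strict Implicit. Unset Printing Implicit Defensive.

Fixpoint gsize (g : game) : nat :=
  match g with Game L R => (sumn (map gsize L) + sumn (map gsize R)).+1 end.

Fixpoint inl (g : game) (L : seq game) : Prop :=
  match L with [::] => False | x :: l => x = g \/ inl g l end.

Lemma inl_le g L : inl g L -> gsize g <= sumn (map gsize L).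
Proof. elim: L => //= x l IH [<-|/IH]; lia. Qed.
Lemma inlL g L R : inl g L -> gsize g < gsize (Game L R).
Proof. move/inl_le => /=; lia. Qed.
Lemma inlR g L R : inl g R -> gsize g < gsize (Game L R).
Proof. move/inl_le => /=; lia. Qed.

Lemma has_ext (f f' : pred game) L : (forall g, inl g L -> f g = f' g) -> has f L = has f' L.
Proof.
elim: L => //= x l IH H. rewrite (H x); last by left.
by rewrite IH // => g Hg; apply: H; right.
Qed.

Lemma hasPi (f : pred game) L : reflect (exists g, inl g L /\ f g) (has f L).
Proof.
elim: L => /= [|x l IH]; first by constructor => -[g []].
case Hx: (f x) => /=. constructor; exists x; by split; [left|].
apply: (iffP IH) => [[g [Hg Hf]]|[g [[<-|Hg] Hf]]].
- by exists g; split => //; right.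
- by rewrite Hx in Hf.
- by exists g.
Qed.

Definition Aw G H := (wins (gadd G (gneg H))).1.
Definition Bw G H := (wins (gadd G (gneg H))).2.

Lemma gadd_Game GL GR HL HR : gadd (Game GL GR) (Game HL HR) =
  Game ([seq gadd g (Game HL HR) | g <- GL] ++ [seq gadd (Game GL GR) h | h <- HL])
       ([seq gadd g (Game HL HR) | g <- GR] ++ [seq gadd (Game GL GR) h | h <- HR]).
Proof. reflexivity. Qed.

Lemma Aw_Game GL GR HL HR : Aw (Game GL GR) (Game HL HR) =
  has (fun g => ~~ Bw g (Game HL HR)) GL || has (fun h => ~~ Bw (Game GL GR) h) HR.
Proof. by rewrite /Aw /= has_cat !has_map. Qed.

Lemma Bw_Game GL GR HL HR : Bw (Game GL GR) (Game HL HR) =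
  has (fun g => ~~ Aw g (Game HL HR)) GR || has (fun h => ~~ Aw (Game GL GR) h) HL.
Proof. by rewrite /Bw /= has_cat !has_map. Qed.

Lemma AB_aux n : forall G H, gsize G + gsize H < n -> Aw G H = Bw H G /\ Aw H G = Bw G H.
Proof.
elim: n => // n IH [GL GR] [HL HR] Hs.
rewrite !Aw_Game !Bw_Game; split.
- rewrite orbC; congr orb; apply: has_ext => g Hg; congr negb.
  + have /inlR := Hg => /(_ HL) Hl.
    have [] := IH (Game GL GR) g; first by move: Hs Hl => /=; lia.
    by move=> _ ->.
  + have /inlL := Hg => /(_ GR) Hl.
    have [] := IH g (Game HL HR); first by move: Hs Hl => /=; lia.
    by move=> _ ->.
- rewrite orbC; congr orb; apply: has_ext => g Hg; congr negb.
  + have /inlR := Hg => /(_ GL) Hl.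
    have [] := IH g (Game HL HR); first by move: Hs Hl => /=; lia.
    by move=> -> _.
  + have /inlL := Hg => /(_ HR) Hl.
    have [] := IH (Game GL GR) g; first by move: Hs Hl => /=; lia.
    by move=> -> _.
Qed.

Lemma AB G H : Aw G H = Bw H G.
Proof. by case: (@AB_aux (gsize G + gsize H).+1 G H). Qed.

Definition le G H := ~~ Bw H G.

Lemma le_Game GL GR HL HR : le (Game GL GR) (Game HL HR) =
  ~~ has (fun g => le (Game HL HR) g) GL && ~~ has (fun h => le h (Game GL GR)) HR.
Proof.
rewrite /le Bw_Game negb_or andbC; congr andb; congr negb; apply: has_ext => g _;
  by rewrite AB.
Qed.

Lemma game_eq_le G H : game_eq G H <-> le G H && le H G.
Proof.
rewrite /game_eq /second_player_win -/(Aw G H) -/(Bw G H) AB /le.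
by split => [[-> ->]|/andP].
Qed.

Lemma le_rule1 G H g : inl g (left_opts G) -> le H g -> le G H = false.
Proof.
case: G H => GL GR [HL HR] /= Hg Hle; rewrite le_Game.
have -> : has (fun g => le (Game HL HR) g) GL by apply/hasPi; exists g; split.
by [].
Qed.

Lemma le_rule2 G H h : inl h (right_opts H) -> le h G -> le G H = false.
Proof.
case: G H => GL GR [HL HR] /= Hg Hle; rewrite le_Game.
have -> : has (fun h => le h (Game GL GR)) HR by apply/hasPi; exists h; split.
by rewrite andbF.
Qed.

Lemma le_intro GL GR H :
  (forall g, inl g GL -> le H g = false) ->
  (forall h, inl h (right_opts H) -> le h (Game GL GR) = false) ->
  le (Game GL GR) H.
Proof.
case: H => HL HR /= H1 H2; rewrite le_Game; apply/andP; split; apply/negP => /hasPi [g [Hg Hl]].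
- by rewrite H1 in Hl.
- by rewrite H2 in Hl.
Qed.

Lemma le_elimL G H g : le G H -> inl g (left_opts G) -> le H g = false.
Proof. by move=> Hle Hg; apply/negbTE/negP => Hl; rewrite (le_rule1 Hg Hl) in Hle. Qed.

Lemma le_elimR G H h : le G H -> inl h (right_opts H) -> le h G = false.
Proof. by move=> Hle Hg; apply/negbTE/negP => Hl; rewrite (le_rule2 Hg Hl) in Hle. Qed.

Lemma le_refl_aux n : forall G, gsize G < n -> le G G.
Proof.
elim: n => // n IH [GL GR] Hs; apply: le_intro => g Hg /=.
- apply: (le_rule1 (g := g)) => //; apply: IH; have := inlL GR Hg; move: Hs => /=; lia.
- apply: (le_rule2 (h := g)) => //; apply: IH; have := inlR GL Hg; move: Hs => /=; lia.
Qed.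

Lemma le_refl G : le G G.
Proof. exact: (@le_refl_aux (gsize G).+1). Qed.

Lemma le_trans_aux n : forall G H K, gsize G + gsize H + gsize K < n ->
  le G H -> le H K -> le G K.
Proof.
elim: n => // n IH [GL GR] H [KL KR] Hs HGH HHK; apply: le_intro => g Hg /=.
- apply/negbTE/negP => HK.
  have : le H g.
    apply: (IH H (Game KL KR) g) => //; have := inlL GR Hg; move: Hs => /=; lia.
  by rewrite (le_elimL HGH).
- apply/negbTE/negP => HK.
  have : le g H.
    apply: (IH g (Game GL GR) H) => //; have := inlR KL Hg; move: Hs => /=; lia.
  by rewrite (le_elimR HHK).
Qed.

Lemma le_trans G H K : le G H -> le H K -> le G K.
Proof. exact: (@le_trans_aux (gsize G + gsize H + gsize K).+1). Qed.

Lemma le_neg_aux n : forall G H, gsize G + gsize H < n -> le G H = le (gneg H) (gneg G).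
Proof.
elim: n => // n IH [GL GR] [HL HR] Hs /=.
rewrite !le_Game !has_map andbC; congr andb; congr negb; apply: has_ext => g Hg /=.
- rewrite [LHS]IH //; have := inlR HL Hg; move: Hs => /=; lia.
- rewrite [LHS]IH //; have := inlL GR Hg; move: Hs => /=; lia.
Qed.

Lemma le_neg G H : le G H = le (gneg H) (gneg G).
Proof. exact: (@le_neg_aux (gsize G + gsize H).+1). Qed.

Definition eqv G H := le G H && le H G.

Lemma eqv_refl G : eqv G G.
Proof. by rewrite /eqv le_refl. Qed.
Lemma eqv_sym G H : eqv G H -> eqv H G.
Proof. by rewrite /eqv andbC. Qed.
Lemma eqv_trans G H K : eqv G H -> eqv H K -> eqv G K.
Proof. by case/andP => ? ? /andP [? ?]; apply/andP; split; apply: le_trans; eauto. Qed.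
Lemma eqv_neg G H : eqv G H -> eqv (gneg G) (gneg H).
Proof. by rewrite /eqv -!le_neg andbC. Qed.

Lemma le_congr G G' H H' : eqv G G' -> eqv H H' -> le G H = le G' H'.
Proof.
case/andP => h1 h2 /andP [h3 h4]; apply/idP/idP => h.
- by apply: (le_trans h2); apply: le_trans h3.
- by apply: (le_trans h1); apply: le_trans h4.
Qed.

Definition opts_sub (L L' : seq game) := forall g, inl g L -> exists g', inl g' L' /\ eqv g g'.
Definition opts_eq L L' := opts_sub L L' /\ opts_sub L' L.

Lemma le_repl L R L' R' : opts_sub L L' -> opts_sub R' R -> le (Game L R) (Game L' R').
Proof.
move=> HL HR; apply: le_intro => g Hg /=.
- case: (HL g Hg) => g' [Hg' He]; rewrite (@le_congr _ _ _ _ (eqv_refl _) He).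
  by apply: (le_rule1 (g := g')) => //; exact: le_refl.
- case: (HR g Hg) => g' [Hg' He]; rewrite (@le_congr _ _ _ _ He (eqv_refl _)).
  by apply: (le_rule2 (h := g')) => //; exact: le_refl.
Qed.

Lemma eqv_repl L R L' R' : opts_eq L L' -> opts_eq R R' -> eqv (Game L R) (Game L' R').
Proof. by case=> ? ? [? ?]; apply/andP; split; apply: le_repl. Qed.

Lemma opts_eq2 a b a' b' : eqv a a' -> eqv b b' -> opts_eq [:: a; b] [:: a'; b'].
Proof.
move=> ha hb; split => g /=.
- by case=> [<-|[<-|[]]]; [exists a'|exists b']; split; auto.
- by case=> [<-|[<-|[]]]; [exists a|exists b]; split; auto; apply: eqv_sym.
Qed.

Lemma opts_eq_refl L : opts_eq L L.
Proof. by split => g Hg; exists g; split => //; apply: eqv_refl. Qed.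

Lemma le_leftopt G H : inl H (left_opts G) -> le G H = false.
Proof. by move=> h; apply: (le_rule1 h); apply: le_refl. Qed.
Lemma le_rightopt G H : inl G (right_opts H) -> le G H = false.
Proof. by move=> h; apply: (le_rule2 h); apply: le_refl. Qed.

Ltac inl_solve := simpl; repeat (first [left; reflexivity | right]).
Ltac opt := first [ apply: le_leftopt; solve [inl_solve] | apply: le_rightopt; solve [inl_solve] ].
Ltac intro_le := apply: le_intro => ? /=; let H := fresh in intro H;
  repeat match goal with
         | H : _ \/ _ |- _ => destruct H as [<-|H]
         | H : False |- _ => destruct H
         end.

Fixpoint W (m : nat) : game :=
  match m with 0 => gstar | m'.+1 => Game [:: gzero; W m'] [:: gzero] end.

Lemma up_pow_S m : up_pow m.+1 = Game [:: if m is 0 then gzero else up_pow m] [:: gstar].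
Proof. by case: m. Qed.

Lemma f1 k : le gzero (up_pow k).
Proof.
have -> : up_pow k = Game [:: if k.-1 is 0 then gzero else up_pow k.-1] [:: gstar].
  by case: k => [|k]; [|rewrite up_pow_S].
rewrite /gzero; intro_le; opt.
Qed.

Lemma f2 m : le gstar (W m.+1).
Proof. rewrite /=; intro_le; opt. Qed.

Lemma map_ext_inl (f : game -> game) L : (forall g, inl g L -> f g = g) -> map f L = L.
Proof. elim: L => //= x l IH H; rewrite H ?IH //; [move=> g Hg; apply: H; by right | by left]. Qed.

Lemma gadd0_aux n : forall G, gsize G < n -> gadd G gzero = G.
Proof.
elim: n => // n IH [L R] Hs; rewrite /gzero gadd_Game /= !cats0.
rewrite !map_ext_inl // => g Hg; apply: IH.
- by have := inlR L Hg; move: Hs => /=; lia.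
- by have := inlL R Hg; move: Hs => /=; lia.
Qed.
Lemma gadd0 G : gadd G gzero = G.
Proof. exact: (@gadd0_aux (gsize G).+1). Qed.

Lemma gadd0l_aux n : forall G, gsize G < n -> gadd gzero G = G.
Proof.
elim: n => // n IH [L R] Hs; rewrite /gzero gadd_Game /=.
rewrite !map_ext_inl // => g Hg; apply: IH.
- by have := inlR L Hg; move: Hs => /=; lia.
- by have := inlL R Hg; move: Hs => /=; lia.
Qed.
Lemma gadd0l G : gadd gzero G = G.
Proof. exact: (@gadd0l_aux (gsize G).+1). Qed.

Lemma gneg_Game L R : gneg (Game L R) = Game (map gneg R) (map gneg L).
Proof. by []. Qed.

Lemma map_ext2 (f f' : game -> game) L : (forall g, inl g L -> f g = f' g) -> map f L = map f' L.
Proof. elim: L => //= x l IH H; rewrite H ?IH //; [move=> g Hg; apply: H; by right | by left]. Qed.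

Lemma gneg_add_aux n : forall G H, gsize G + gsize H < n -> gneg (gadd G H) = gadd (gneg G) (gneg H).
Proof.
elim: n => // n IH [GL GR] [HL HR] Hs.
rewrite gadd_Game !gneg_Game gadd_Game !map_cat -!map_comp.
rewrite -!gneg_Game.
congr Game; congr cat; apply: map_ext2 => g Hg; apply: IH.
- by have := inlR GL Hg; move: Hs => /=; lia.
- by have := inlR HL Hg; move: Hs => /=; lia.
- by have := inlL GR Hg; move: Hs => /=; lia.
- by have := inlL HR Hg; move: Hs => /=; lia.
Qed.
Lemma gneg_add G H : gneg (gadd G H) = gadd (gneg G) (gneg H).
Proof. exact: (@gneg_add_aux (gsize G + gsize H).+1). Qed.

Lemma gneg_inv_aux n : forall G, gsize G < n -> gneg (gneg G) = G.
Proof.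
elim: n => // n IH [L R] Hs; rewrite !gneg_Game -!map_comp.
congr Game; apply: map_ext_inl => g Hg /=; apply: IH.
- by have := inlL R Hg; move: Hs => /=; lia.
- by have := inlR L Hg; move: Hs => /=; lia.
Qed.
Lemma gneg_inv G : gneg (gneg G) = G.
Proof. exact: (@gneg_inv_aux (gsize G).+1). Qed.

Lemma down_up m : down_pow m = gneg (up_pow m).
Proof. elim: m => [|[|m] IH] //=. by rewrite -IH. Qed.

Lemma gadd_star L R : gadd (Game L R) gstar =
  Game (map (fun g => gadd g gstar) L ++ [:: Game L R]) (map (fun g => gadd g gstar) R ++ [:: Game L R]).
Proof.
have -> : gadd (Game L R) gstar =
  Game (map (fun g => gadd g gstar) L ++ [:: gadd (Game L R) gzero]) (map (fun g => gadd g gstar) R ++ [:: gadd (Game L R) gzero]) by [].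
by rewrite gadd0.
Qed.

Lemma eqvA m : 1 <= m -> eqv (gadd (up_pow m) gstar) (W m).
Proof.
elim: m => // m IH _.
set U := up_pow m.+1.
have HU : U = Game [:: if m is 0 then gzero else up_pow m] [:: gstar] by rewrite /U up_pow_S.
have E : gadd U gstar = Game [:: gadd (if m is 0 then gzero else up_pow m) gstar; U] [:: gadd gstar gstar; U].
  by rewrite {1}HU gadd_star -HU.
rewrite E.
apply: (@eqv_trans _ (Game [:: W m; U] [:: gzero; U])).
  apply: eqv_repl; apply: opts_eq2; try apply: eqv_refl.
  - case: m IH {E HU U} => [|m] IH; first by rewrite gadd0l; apply: eqv_refl.
    by apply: IH.
  - have -> : gadd gstar gstar = Game [:: gstar; gstar] [:: gstar; gstar] by [].
    apply/andP; split; intro_le; opt.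
have f1U := f1 m.+1; rewrite -/U in f1U.
apply/andP; split => /=; intro_le; try opt.
- by apply: (@le_rule2 _ _ gstar); rewrite ?HU /=; [left|apply: f2].
- by apply: (@le_rule1 _ _ U) => //=; right; left.
- by apply: (@le_rule2 _ _ gzero) => //=; left.
Qed.

Lemma eqvB m : eqv (Game [:: gzero; W m] [:: gzero; W m.+2]) (W m.+1).
Proof. apply/andP; split => /=; intro_le; opt. Qed.

Lemma eqvC : eqv (Game [:: gzero; gstar2] [:: gzero; W 1]) gstar.
Proof. apply/andP; split => /=; intro_le; opt. Qed.

Lemma eqvD : eqv (Game [:: gzero; gzero] [:: gzero]) gstar.
Proof. apply/andP; split => /=; intro_le; opt. Qed.

Definition V x y := if x == y then (if x == 0 then gzero else gstar2)
  else if (x == y.+1) || (y == x.+1) then gstar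
  else if y.+1 < x then W (x - y - 1) else gneg (W (y - x - 1)).

Lemma V_eq x : V x x = if x == 0 then gzero else gstar2.
Proof. by rewrite /V eqxx. Qed.
Lemma V_s1 y : V y.+1 y = gstar.
Proof. rewrite /V eqxx /=; have -> : (y.+1 == y) = false by lia. by []. Qed.
Lemma V_1s y : V y y.+1 = gstar.
Proof. rewrite /V eqxx orbT; have -> : (y == y.+1) = false by lia. by []. Qed.
Lemma V_gt x y : y.+1 < x -> V x y = W (x - y - 1).
Proof.
move=> h; rewrite /V h.
have -> : (x == y) = false by lia.
have -> : (x == y.+1) = false by lia.
have -> : (y == x.+1) = false by lia.
by [].
Qed.
Lemma V_lt x y : x.+1 < y -> V x y = gneg (W (y - x - 1)).
Proof.
move=> h; rewrite /V.
have -> : (x == y) = false by lia.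
have -> : (x == y.+1) = false by lia.
have -> : (y == x.+1) = false by lia.
have -> : (y.+1 < x) = false by lia.
by [].
Qed.

Lemma V_sym x y : V x y = gneg (V y x).
Proof.
have [h|[h|[h|[h|h]]]] : x = y \/ x = y.+1 \/ y = x.+1 \/ y.+1 < x \/ x.+1 < y by lia.
- by subst; rewrite V_eq; case: eqP.
- by subst; rewrite V_s1 V_1s.
- by subst; rewrite V_s1 V_1s.
- by rewrite (V_gt h) (V_lt h) gneg_inv.
- by rewrite (V_lt h) (V_gt h).
Qed.

Definition M x y := Game
  ((if 0 < x + y then [:: gzero] else [::]) ++ (if 0 < x then [:: V x.-1 y] else [::]))
  ((if 0 < x + y then [:: gzero] else [::]) ++ (if 0 < y then [:: V x y.-1] else [::])).

Lemma M_sym x y : M x y = gneg (M y x).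
Proof.
rewrite /M gneg_Game !map_cat addnC; congr Game; congr cat;
  try by case: ifP.
- by case: ifP => // _; rewrite /= [V y x.-1]V_sym gneg_inv.
- by case: ifP => // _; rewrite /= [V y.-1 x]V_sym gneg_inv.
Qed.

Lemma V_W y m : V (y + m.+1) y = W m.
Proof.
case: m => [|m]; first by rewrite addn1 V_s1.
rewrite V_gt; last by lia.
by have -> : y + m.+2 - y - 1 = m.+1 by lia.
Qed.

Lemma M_V_le x y : y <= x -> eqv (M x y) (V x y).
Proof.
move=> hyx; have [d ->] : exists d, x = y + d by exists (x - y); lia.
case: d => [|[|m]].
- rewrite addn0 V_eq; case: y {hyx} => [|k]; first by apply: eqv_refl.
  rewrite /M /= V_1s V_s1; exact: eqv_refl.
- rewrite addn1 V_s1; case: y {hyx} => [|k].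
  + rewrite /M /= V_eq; exact: eqvD.
  + rewrite /M /= V_eq /= V_gt; last by lia.
    have -> : k.+2 - k - 1 = 1 by lia.
    exact: eqvC.
- rewrite V_W; case: y {hyx} => [|k].
  + rewrite /M /= -[m.+1]add0n V_W; exact: eqv_refl.
  + rewrite /M /=.
    have -> : k + m.+2 = k.+1 + m.+1 by lia.
    rewrite V_W.
    have -> : k.+1 + m.+2 = k + m.+3 by lia.
    rewrite V_W; exact: eqvB.
Qed.

Lemma M_V x y : eqv (M x y) (V x y).
Proof.
case: (leqP y x) => h; first exact: M_V_le.
rewrite M_sym [V x y]V_sym; apply: eqv_neg; apply: M_V_le; lia.
Qed.

Lemma inl_cat g l1 l2 : inl g (l1 ++ l2) <-> inl g l1 \/ inl g l2.
Proof. elim: l1 => /= [|x l IH]; [tauto|rewrite IH; tauto]. Qed.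

Lemma inl_map (T : eqType) (f : T -> game) (s : seq T) g :
  inl g (map f s) <-> exists v, v \in s /\ f v = g.
Proof.
elim: s => /= [|x s IH]; first by split => // -[v []].
rewrite IH; split.
- case=> [<-|[v [hv <-]]]; first by exists x; rewrite mem_head.
  by exists v; rewrite in_cons hv orbT.
- case=> v []; rewrite in_cons => /orP [/eqP ->|hv] <-; first by left.
  by right; exists v.
Qed.

Lemma color_eqb_refl x : color_eqb x x.
Proof. by case: x. Qed.
Lemma color_eqb_eq x y : color_eqb x y -> x = y.
Proof. by case: x; case: y. Qed.
Lemma color_eqb_neq x y : x <> y -> color_eqb x y = false.
Proof. by case: x; case: y. Qed.

Section Star.
Variables (n : nat) (c : 'I_n.+1 -> color).
Hypothesis hn : 1 <= n.
Hypothesis hc0 : c ord0 = colC.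
Hypothesis hcl : forall i : 'I_n.+1, i != ord0 -> c i <> colC.

Local Notation T := 'I_n.+1.
Local Notation adj := (@star_adj n).
Local Notation dom := (dom_game_from adj c).

Definition cnt (p : color) (D : {set T}) := #|[set v | color_eqb (c v) p & v \notin D]|.
Definition Inv (D : {set T}) := D = set0 \/ ord0 \in D.

Lemma cnb0 : cnbhd adj ord0 = setT.
Proof. apply/setP => u; rewrite !inE /star_adj eqxx; by case: (u == ord0). Qed.

Lemma cnbv v : v != ord0 -> cnbhd adj v = [set v; ord0].
Proof. move=> hv; apply/setP => u; rewrite !inE /star_adj (negbTE hv); by case: (u == ord0); case: (u == v). Qed.

Lemma leaf_col v : v != ord0 -> c v = colA \/ c v = colB.
Proof. move=> /hcl; case: (c v); tauto. Qed.

Lemma cnt_pos p (D : {set T}) : 0 < cnt p D <-> exists v, c v = p /\ v \notin D.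
Proof.
rewrite /cnt card_gt0; split.
- case/set0Pn => v; rewrite inE => /andP [/color_eqb_eq h1 h2]; by exists v.
- case=> v [h1 h2]; apply/set0Pn; exists v; by rewrite inE h1 color_eqb_refl.
Qed.

Lemma undom_pos (D : {set T}) : Inv D -> (exists u, u \notin D) -> 0 < cnt colA D + cnt colB D.
Proof.
move=> hD [u hu].
have [w [hw0 hwD]] : exists w, w != ord0 /\ w \notin D.
  case: hD => [->|h0].
  - exists ord_max; rewrite in_set0; split => //; apply/eqP => /(congr1 val) /=; lia.
  - exists u; split => //; apply/eqP => e; by rewrite e h0 in hu.
case: (leaf_col hw0) => hc.
- have : 0 < cnt colA D by apply/cnt_pos; exists w.
  lia.
- have : 0 < cnt colB D by apply/cnt_pos; exists w.
  lia.
Qed.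

Lemma cnt_setT p : cnt p setT = 0.
Proof. apply/eqP; rewrite cards_eq0; apply/eqP/setP => u; by rewrite !inE andbF. Qed.

Lemma cnt_move_same p (D : {set T}) v : p <> colC -> c v = p -> v \notin D ->
  cnt p (D :|: [set v; ord0]) = (cnt p D).-1.
Proof.
move=> hp hv hvD; rewrite /cnt.
set A := [set u | color_eqb (c u) p & u \notin D].
have -> : [set u | color_eqb (c u) p & u \notin D :|: [set v; ord0]] = A :\ v.
  apply/setP => u; rewrite !inE.
  case hu: (color_eqb (c u) p); last by rewrite andbF.
  have -> : (u == ord0) = false.
    apply/negbTE/eqP => e; move: hu; rewrite e hc0 => /color_eqb_eq; by move/esym.
  by rewrite /= orbF negb_or andbC.
have hvA : v \in A by rewrite inE hv color_eqb_refl.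
by rewrite (cardsD1 v A) hvA.
Qed.

Lemma cnt_move_other p q (D : {set T}) v : q <> colC -> c v = p -> p <> q ->
  cnt q (D :|: [set v; ord0]) = cnt q D.
Proof.
move=> hq hv hpq; rewrite /cnt; apply: eq_card => u; rewrite !inE.
case hu: (color_eqb (c u) q) => //=.
have -> : (u == ord0) = false.
  apply/negbTE/eqP => e; move: hu; rewrite e hc0 => /color_eqb_eq; by move/esym.
have -> : (u == v) = false.
  apply/negbTE/eqP => e; move: hu; rewrite e hv => /color_eqb_eq //.
by rewrite !orbF.
Qed.

Lemma cnt_bound (D : {set T}) : cnt colA D + cnt colB D <= n.+1.
Proof.
rewrite /cnt -cardsUI.
have -> : [set v | color_eqb (c v) colA & v \notin D] :&: [set v | color_eqb (c v) colB & v \notin D] = set0.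
  apply/setP => u; rewrite !inE; by case: (c u); rewrite /= ?andbF.
by rewrite cards0 addn0; apply: leq_trans (max_card _) _; rewrite card_ord.
Qed.

Lemma side k (D : {set T}) (q p : color) (can : pred T) (tgt : game) :
  Inv D -> p <> colC -> q <> colC -> p <> q ->
  (forall v, can v = ~~ color_eqb (c v) q) ->
  eqv (dom k setT) gzero ->
  (forall v, c v = p -> v \notin D -> eqv (dom k (D :|: [set v; ord0])) tgt) ->
  opts_eq [seq dom k (D :|: cnbhd adj v) | v <- enum T & can v && playable adj D v]
          ((if 0 < cnt colA D + cnt colB D then [:: gzero] else [::]) ++
           (if 0 < cnt p D then [:: tgt] else [::])).
Proof.
move=> hD hp hq hpq hcan hT hmv; split.
- move=> g /inl_map [v []]; rewrite mem_filter mem_enum andbT hcan => /andP [hcv hpl] <-.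
  case: (eqVneq v ord0) hpl hcv => [->|hv0] hpl hcv.
  + rewrite cnb0 setUT; exists gzero; split => //.
    have -> : 0 < cnt colA D + cnt colB D.
      apply: undom_pos => //; move: hpl; rewrite /playable cnb0 => /subsetPn [u _ hu]; by exists u.
    by apply/inl_cat; left; left.
  + have hcv' : c v = p.
      have gen : forall p' q' : color, p' <> colC -> q' <> colC -> p' <> q' ->
          ~~ color_eqb (c v) q' -> c v = p'.
        move=> p' q'; case: (leaf_col hv0) => ->;
          case: p'; case: q' => /=; try congruence; move=> *; congruence.
      exact: (gen p q hp hq hpq hcv).
    have hvD : v \notin D.
      case: hD => [->|h0]; first by rewrite in_set0.
      apply/negP => hvD; move: hpl; rewrite /playable cnbv // => /negP; apply.
      by apply/subsetP => u; rewrite !inE => /orP [/eqP->|/eqP->].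
    rewrite cnbv //; exists tgt; split; last by apply: hmv.
    apply/inl_cat; right.
    have -> : 0 < cnt p D by apply/cnt_pos; exists v.
    by left.
- move=> g /inl_cat [].
  + case: ifP => // hpos [<-|[]].
    exists (dom k (D :|: cnbhd adj ord0)); split.
    * apply/inl_map; exists ord0; split => //.
      rewrite mem_filter mem_enum andbT hcan hc0 color_eqb_neq; last by move=> e; apply: hq.
      rewrite /playable cnb0; apply/subsetPn.
      move: hpos; rewrite addn_gt0 => /orP [] /cnt_pos [u [_ hu]]; by exists u.
    * by rewrite cnb0 setUT; apply: eqv_sym.
  + case: ifP => // hpos [<-|[]].
    case/cnt_pos: hpos => v [hv hvD].
    have hv0 : v != ord0 by apply/eqP => e; rewrite e hc0 in hv; apply: hp.
    exists (dom k (D :|: cnbhd adj v)); split.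
    * apply/inl_map; exists v; split => //.
      rewrite mem_filter mem_enum andbT hcan hv color_eqb_neq //=.
      rewrite /playable cnbv //; apply/subsetPn; exists v => //; by rewrite !inE eqxx.
    * by rewrite cnbv //; apply: eqv_sym; apply: hmv.
Qed.

Lemma dom_S k (D : {set T}) : dom k.+1 D =
  Game [seq dom k (D :|: cnbhd adj v) | v <- enum T & alice_can c v && playable adj D v]
       [seq dom k (D :|: cnbhd adj v) | v <- enum T & bob_can c v && playable adj D v].
Proof. by []. Qed.

Lemma dom_V k (D : {set T}) : Inv D -> cnt colA D + cnt colB D <= k ->
  eqv (dom k D) (V (cnt colA D) (cnt colB D)).
Proof.
elim: k D => [|k IH] D hD hk.
  have hA : cnt colA D = 0 by lia.
  have hB : cnt colB D = 0 by lia.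
  by rewrite hA hB V_eq; apply: eqv_refl.
have hT : eqv (dom k setT) gzero.
  have := IH setT; rewrite !cnt_setT V_eq; apply => //; right; exact: in_setT.
apply: (eqv_trans _ (M_V _ _)).
rewrite dom_S /M; apply: eqv_repl.
- apply: (side (q := colB) (p := colA)) => //.
  move=> v hv hvD.
  have hv0 : v != ord0 by apply/eqP => e; rewrite e hc0 in hv.
  have hpos : 0 < cnt colA D by apply/cnt_pos; exists v.
  have := IH (D :|: [set v; ord0]).
  rewrite (cnt_move_same _ hv hvD) // (cnt_move_other _ _ hv) //.
  apply; [by rewrite /Inv; right; rewrite !inE eqxx !orbT | lia].
- apply: (side (q := colA) (p := colB)) => //.
  move=> v hv hvD.
  have hv0 : v != ord0 by apply/eqP => e; rewrite e hc0 in hv.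
  have hpos : 0 < cnt colB D by apply/cnt_pos; exists v.
  have := IH (D :|: [set v; ord0]).
  rewrite (cnt_move_same _ hv hvD) // (cnt_move_other _ _ hv) //.
  apply; [by rewrite /Inv; right; rewrite !inE eqxx !orbT | lia].
Qed.
End Star.



Theorem theorem7 (n a b : nat) (c : 'I_n.+1 -> color) :
  1 <= n ->
  c ord0 = colC ->
  (forall i : 'I_n.+1, i != ord0 -> c i <> colC) ->
  #|[set i | color_eqb (c i) colA]| = a ->
  #|[set i | color_eqb (c i) colB]| = b ->
  let G := dom_game (@star_adj n) c in
  (a = b -> game_eq G gstar2) /\
  ((a = b.+1 \/ b = a.+1) -> game_eq G gstar) /\
  (b.+2 <= a -> game_eq G (gadd (up_pow (a - b - 1)) gstar)) /\
  (a.+2 <= b -> game_eq G (gadd (down_pow (b - a - 1)) gstar)).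
Proof.
move=> hn hc0 hcl hA hB G.
have cA : cnt c colA set0 = a by rewrite /cnt -hA; apply: eq_card => i; rewrite !inE andbT.
have cB : cnt c colB set0 = b by rewrite /cnt -hB; apply: eq_card => i; rewrite !inE andbT.
have hI : Inv (set0 : {set 'I_n.+1}) by left.
have hG : eqv G (V a b).
  rewrite /G /dom_game card_ord -cA -cB; apply: dom_V => //; exact: cnt_bound.
have hpos : 0 < a + b.
  rewrite -cA -cB; apply: (undom_pos hn hcl hI); exists ord0; by rewrite in_set0.
split; [|split; [|split]].
- move=> e; rewrite -e V_eq in hG; apply/game_eq_le; move: hG.
  by have -> : (a == 0) = false by lia.
- case=> e; rewrite e ?V_s1 ?V_1s in hG; exact/game_eq_le.
- move=> h; apply/game_eq_le; apply: (eqv_trans hG); rewrite V_gt //.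
  apply: eqv_sym; apply: eqvA; lia.
- move=> h; apply/game_eq_le; apply: (eqv_trans hG); rewrite V_lt //.
  rewrite down_up -[gstar]/(gneg gstar) -gneg_add.
  apply: eqv_neg; apply: eqv_sym; apply: eqvA; lia.
Qed.
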